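(* Let $(b,c)$ be a weighted graph over $V$ with $n(x)>0$ for all $x\in V$, and let $Q=Q_{b,c,n}$ be the associated form on $\ell^2(V,n)$. Then for all $u\in D(Q)$ $$\Big(1-\sqrt{1-\alpha_{b,c,n}^2}\Big)\|u\|_n^2\le Q(u)\le\Big(1+\sqrt{1-\alpha_{b,c,n}^2}\Big)\|u\|_n^2,$$ where $\alpha_{b,c,n}=\alpha_{b,c,n}(V)$.
   Context: Let $V$ be a countably infinite set. A weighted graph over $V$ is a pair $(b,c)$ of maps $b:V\times V\to[0,\infty)$ and $c:V\to[0,\infty)$ with $b(x,x)=0$, $b(x,y)=b(y,x)$ and $\sum_{y\in V}b(x,y)<\infty$ for all $x,y\in V$. Let $n(x)=\sum_y b(x,y)+c(x)$ and $\|u\|_n^2=\sum_x n(x)u(x)^2$. Define $Q^{\max}(u)=\frac12\sum_{x,y}b(x,y)(u(x)-u(y))^2+\sum_x c(x)u(x)^2$; $Q_{b,c,n}$ is the closure in $\ell^2(V,n)$ of the restriction of $Q^{\max}$ to finitely supported functions. For finite $W$ let $|\partial W|=\sum_{x\in W,y\notin W}b(x,y)+\sum_{x\in W}c(x)$, $n(W)=\sum_{x\in W}n(x)$, and $\alpha_{b,c,n}(U)=\inf\{|\partial W|/n(W):\ W\subseteq U\text{ finite, nonempty}\}$. *)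

(* Defs.v *)
From Stdlib Require Import Reals Lra List Classical ClassicalEpsilon.
Open Scope R_scope.

Section Sums.
Context {T : Type}.

Definition fsum (l : list T) (f : T -> R) : R :=
  fold_right (fun x acc => f x + acc) 0 l.

Definition psums (f : T -> R) : R -> Prop :=
  fun s => exists l : list T, NoDup l /\ s = fsum l f.

Definition summable (f : T -> R) : Prop :=
  exists M : R, forall l : list T, NoDup l -> fsum l f <= M.

(* sum of a nonnegative family = sup of finite partial sums
   (meaningful when the family is summable) *)
Definition tsum (f : T -> R) : R :=
  epsilon (inhabits 0) (fun s => is_lub (psums f) s).

Definition fin_supp (u : T -> R) : Prop :=
  exists l : list T, forall x, ~ In x l -> u x = 0.
End Sums.

Definition countably_infinite (V : Type) : Prop :=
  exists e : nat -> V, (forall i j, e i = e j -> i = j) /\ (forall x, exists i, e i = x).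

Definition is_weighted_graph {V : Type} (b : V -> V -> R) (c : V -> R) : Prop :=
  (forall x y, 0 <= b x y) /\ (forall x, 0 <= c x) /\
  (forall x, b x x = 0) /\ (forall x y, b x y = b y x) /\
  (forall x, summable (b x)).

Definition nw {V : Type} (b : V -> V -> R) (c : V -> R) (x : V) : R :=
  tsum (b x) + c x.

Definition nrm2 {V : Type} (n : V -> R) (u : V -> R) : R :=
  tsum (fun x => n x * (u x) ^ 2).

Definition in_l2 {V : Type} (n : V -> R) (u : V -> R) : Prop :=
  summable (fun x => n x * (u x) ^ 2).

Definition Qmax {V : Type} (b : V -> V -> R) (c : V -> R) (u : V -> R) : R :=
  / 2 * tsum (fun p : V * V => b (fst p) (snd p) * (u (fst p) - u (snd p)) ^ 2)
  + tsum (fun x => c x * (u x) ^ 2).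

(* |dW| for a finite set W given as a duplicate-free list *)
Definition bdry {V : Type} (b : V -> V -> R) (c : V -> R) (W : list V) : R :=
  fsum W (fun x => tsum (fun y => b x y * (if excluded_middle_informative (In y W) then 0 else 1)))
  + fsum W c.

Definition nW {V : Type} (n : V -> R) (W : list V) : R := fsum W n.

Definition ratios {V : Type} (b : V -> V -> R) (c : V -> R) (U : V -> Prop) : R -> Prop :=
  fun r => exists W : list V, NoDup W /\ W <> nil /\ (forall x, In x W -> U x) /\
    r = bdry b c W / nW (nw b c) W.

(* alpha_{b,c,n}(U) = infimum of the ratios (as minus the sup of their negatives) *)
Definition alpha {V : Type} (b : V -> V -> R) (c : V -> R) (U : V -> Prop) : R :=
  - epsilon (inhabits 0) (fun s => is_lub (fun r => ratios b c U (- r)) s).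

(* u in D(Q_{b,c,n}) with Q_{b,c,n}(u) = q : u is in l^2(V,n) and there are finitely
   supported u_k with u_k -> u in l^2(V,n), (u_k) Q^max-Cauchy, and Q^max(u_k) -> q.
   (This is the closure of Q^max restricted to finitely supported functions.) *)
Definition QDom_val {V : Type} (b : V -> V -> R) (c : V -> R) (u : V -> R) (q : R) : Prop :=
  in_l2 (nw b c) u /\
  exists uk : nat -> V -> R,
    (forall k, fin_supp (uk k)) /\
    Un_cv (fun k => nrm2 (nw b c) (fun x => uk k x - u x)) 0 /\
    (forall eps, eps > 0 -> exists N, forall k l, (k >= N)%nat -> (l >= N)%nat ->
        Qmax b c (fun x => uk k x - uk l x) < eps) /\
    Un_cv (fun k => Qmax b c (uk k)) q.

(* Main.v *)
Require Import Defs.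
From Stdlib Require Import Reals Lra List Classical ClassicalEpsilon FunctionalExtensionality Psatz.
Open Scope R_scope.

Definition em := excluded_middle_informative.

Section Fin.
Context {T : Type}.

Lemma fsum_cons a l (f : T -> R) : fsum (a::l) f = f a + fsum l f.
Proof. reflexivity. Qed.
Lemma fsum_nil (f : T -> R) : fsum nil f = 0.
Proof. reflexivity. Qed.

Lemma fsum_app l1 l2 (f : T -> R) : fsum (l1++l2) f = fsum l1 f + fsum l2 f.
Proof. induction l1; [cbn [app]; rewrite fsum_nil; lra | cbn [app]; rewrite !fsum_cons, IHl1; lra]. Qed.

Lemma fsum_ext l (f g : T -> R) : (forall x, In x l -> f x = g x) -> fsum l f = fsum l g.
Proof. induction l; intros H; [reflexivity|]. rewrite !fsum_cons. rewrite H by (left; auto).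
  rewrite IHl; auto. intros; apply H; right; auto. Qed.

Lemma fsum_plus l (f g : T -> R) : fsum l (fun x => f x + g x) = fsum l f + fsum l g.
Proof. induction l. unfold fsum; simpl; lra. rewrite !fsum_cons, IHl. lra. Qed.

Lemma fsum_scal l a (f : T -> R) : fsum l (fun x => a * f x) = a * fsum l f.
Proof. induction l. unfold fsum; simpl; lra. rewrite !fsum_cons, IHl. lra. Qed.

Lemma fsum_zero l : fsum l (fun _ : T => 0) = 0.
Proof. induction l. reflexivity. rewrite fsum_cons, IHl. lra. Qed.

Lemma fsum_nonneg l (f : T -> R) : (forall x, In x l -> 0 <= f x) -> 0 <= fsum l f.
Proof. induction l; intros H. unfold fsum; simpl; lra. rewrite fsum_cons.
  assert (0 <= f a) by (apply H; left; auto). assert (0 <= fsum l f) by (apply IHl; intros; apply H; right; auto). lra. Qed.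

Lemma fsum_le l (f g : T -> R) : (forall x, In x l -> f x <= g x) -> fsum l f <= fsum l g.
Proof. induction l; intros H. unfold fsum; simpl; lra. rewrite !fsum_cons.
  assert (f a <= g a) by (apply H; left; auto). assert (fsum l f <= fsum l g) by (apply IHl; intros; apply H; right; auto). lra. Qed.

Lemma fsum_pos l (f : T -> R) : l <> nil -> (forall x, In x l -> 0 < f x) -> 0 < fsum l f.
Proof. destruct l; intros Hn H. congruence. rewrite fsum_cons.
  assert (0 < f t) by (apply H; left; auto). assert (0 <= fsum l f) by (apply fsum_nonneg; intros; apply Rlt_le, H; right; auto). lra. Qed.

Lemma fsum_filter (p : T -> bool) l f : fsum (filter p l) f = fsum l (fun x => if p x then f x else 0).
Proof. induction l. reflexivity. cbn [filter]. destruct (p a) eqn:E; rewrite !fsum_cons, IHl; cbv beta; rewrite E; lra. Qed.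

Lemma fsum_split (p : T -> bool) l f : fsum l f = fsum l (fun x => if p x then f x else 0) + fsum l (fun x => if p x then 0 else f x).
Proof. rewrite <- fsum_plus. apply fsum_ext; intros. destruct (p x); lra. Qed.

Lemma fsum_incl l1 l2 (f : T -> R) : NoDup l1 -> incl l1 l2 -> (forall x, 0 <= f x) -> fsum l1 f <= fsum l2 f.
Proof.
  revert l2; induction l1 as [|a l1 IH]; intros l2 Hnd Hinc Hf.
  - rewrite fsum_nil. apply fsum_nonneg; auto.
  - inversion Hnd; subst. destruct (in_split a l2 (Hinc a (or_introl eq_refl))) as [la [lb ->]].
    rewrite fsum_app, fsum_cons, fsum_cons.
    assert (fsum l1 f <= fsum (la++lb) f).
    { apply IH; auto. intros x Hx. assert (In x (la ++ a :: lb)) by (apply Hinc; right; auto).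
      apply in_app_or in H. apply in_or_app. destruct H as [H|[H|H]]; auto. subst; contradiction. }
    rewrite fsum_app in H. lra.
Qed.

Lemma fsum_map {U} (g : U -> T) l f : fsum (map g l) f = fsum l (fun x => f (g x)).
Proof. induction l. reflexivity. cbn [map]. rewrite !fsum_cons, IHl. reflexivity. Qed.

End Fin.

Lemma fsum_exchange {T U} (l1 : list T) (l2 : list U) F :
  fsum l1 (fun x => fsum l2 (fun y => F x y)) = fsum l2 (fun y => fsum l1 (fun x => F x y)).
Proof. induction l1. rewrite fsum_nil. symmetry. apply fsum_zero.
  rewrite fsum_cons, IHl1. rewrite <- fsum_plus. apply fsum_ext; intros. rewrite fsum_cons. reflexivity. Qed.

Lemma NoDup_map_inj {A B} (f : A -> B) l : (forall x y, In x l -> In y l -> f x = f y -> x = y) -> NoDup l -> NoDup (map f l).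
Proof. intros H Hl. apply NoDup_map_NoDup_ForallPairs; auto. Qed.

Section Ts.
Context {T : Type}.

Definition notinb (W : list T) (y : T) : bool := if em (In y W) then false else true.
Definition indW (W : list T) (y : T) : R := if excluded_middle_informative (In y W) then 0 else 1.

Lemma tsum_lub (h : T -> R) : summable h -> is_lub (psums h) (tsum h).
Proof. intros [M HM]. unfold tsum. apply epsilon_spec.
  destruct (completeness (psums h)) as [m Hm].
  - exists M; intros s [l [Hl ->]]; auto.
  - exists 0, nil; split; [constructor|reflexivity].
  - exists m; exact Hm. Qed.

Lemma fsum_le_tsum (h : T -> R) (l : list T) : summable h -> NoDup l -> fsum l h <= tsum h.
Proof. intros Hs Hl. apply (proj1 (tsum_lub h Hs)). exists l; auto. Qed.

Lemma tsum_le_ub (h : T -> R) U : summable h -> (forall l, NoDup l -> fsum l h <= U) -> tsum h <= U.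
Proof. intros Hs HU. apply (proj2 (tsum_lub h Hs)). intros s [l [Hl ->]]; auto. Qed.

Lemma tsum_unique (h : T -> R) s : (forall l, NoDup l -> fsum l h <= s) ->
  (forall U, (forall l, NoDup l -> fsum l h <= U) -> s <= U) -> tsum h = s.
Proof. intros H1 H2. assert (Hs : summable h) by (exists s; auto).
  apply Rle_antisym. apply tsum_le_ub; auto. apply H2. intros; apply fsum_le_tsum; auto. Qed.

Lemma tsum_nonneg (h : T -> R) : summable h -> 0 <= tsum h.
Proof. intros Hs. apply (fsum_le_tsum h nil Hs). constructor. Qed.

Lemma fsum_ind (l W : list T) (h : T -> R) : fsum l (fun y => h y * indW W y) = fsum (filter (notinb W) l) h.
Proof. rewrite fsum_filter; apply fsum_ext; intros; unfold indW, notinb, em; destruct excluded_middle_informative; ring. Qed.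

Lemma fsum_in_part (l W : list T) (h : T -> R) : NoDup l -> (forall x, 0 <= h x) ->
  fsum l (fun x => if notinb W x then 0 else h x) <= fsum W h.
Proof. intros Hl Hh.
  replace (fsum l (fun x => if notinb W x then 0 else h x)) with (fsum (filter (fun x => negb (notinb W x)) l) h).
  2:{ rewrite fsum_filter. apply fsum_ext; intros. destruct (notinb W x); reflexivity. }
  apply fsum_incl; auto. apply NoDup_filter; auto.
  intros x Hx. apply filter_In in Hx. destruct Hx as [_ Hx]. unfold notinb, em in Hx.
  destruct excluded_middle_informative; simpl in Hx; auto; discriminate. Qed.

Lemma summable_ind (h : T -> R) (W : list T) : (forall x, 0 <= h x) -> summable h -> summable (fun y => h y * indW W y).
Proof. intros Hh [M HM]. exists M. intros l Hl. rewrite fsum_ind. apply HM, NoDup_filter; auto. Qed.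

Lemma tsum_split (h : T -> R) (W : list T) : (forall x, 0 <= h x) -> summable h -> NoDup W ->
  tsum h = fsum W h + tsum (fun y => h y * indW W y).
Proof. intros Hh Hs HW. pose proof (summable_ind h W Hh Hs) as Hs'.
  apply tsum_unique.
  - intros l Hl. rewrite (fsum_split (notinb W)).
    assert (fsum l (fun x => if notinb W x then 0 else h x) <= fsum W h) by (apply fsum_in_part; auto).
    assert (fsum l (fun x => if notinb W x then h x else 0) <= tsum (fun y => h y * indW W y)).
    { rewrite <- fsum_filter, <- fsum_ind. apply fsum_le_tsum; auto. }
    lra.
  - intros U HU. cut (tsum (fun y => h y * indW W y) <= U - fsum W h). lra.
    apply tsum_le_ub; auto. intros l Hl. rewrite fsum_ind.
    assert (fsum (W ++ filter (notinb W) l) h <= U).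
    { apply HU. apply NoDup_app; auto. apply NoDup_filter; auto.
      intros a Ha Ha'. apply filter_In in Ha'. destruct Ha' as [_ Ha']. unfold notinb, em in Ha'.
      destruct excluded_middle_informative; [discriminate|contradiction]. }
    rewrite fsum_app in H. lra.
Qed.

Lemma tsum_fin (h : T -> R) (L : list T) : (forall x, 0 <= h x) -> NoDup L -> (forall x, ~ In x L -> h x = 0) ->
  summable h /\ tsum h = fsum L h.
Proof. intros Hh HL Hz.
  assert (Hb : forall l, NoDup l -> fsum l h <= fsum L h).
  { intros l Hl. rewrite (fsum_split (notinb L)).
    assert (fsum l (fun x => if notinb L x then 0 else h x) <= fsum L h) by (apply fsum_in_part; auto).
    assert (fsum l (fun x => if notinb L x then h x else 0) = 0).
    { transitivity (fsum l (fun _ : T => 0)); [|apply fsum_zero]. apply fsum_ext. intros x _. unfold notinb, em.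
      destruct excluded_middle_informative; [reflexivity | apply Hz; auto]. }
    lra. }
  split. exists (fsum L h); auto.
  apply tsum_unique; auto. Qed.

Lemma tsum_scal (h : T -> R) a : 0 <= a -> summable h -> tsum (fun y => a * h y) = a * tsum h.
Proof. intros Ha Hs. apply tsum_unique.
  - intros l Hl. rewrite fsum_scal. apply Rmult_le_compat_l; auto. apply fsum_le_tsum; auto.
  - intros U HU. destruct Ha as [Ha|Ha].
    + cut (tsum h <= U / a). { intros. apply (Rmult_le_compat_l a) in H; [|lra]. field_simplify in H; lra. }
      apply tsum_le_ub; auto. intros l Hl. specialize (HU l Hl). rewrite fsum_scal in HU.
      apply (Rmult_le_reg_l a); auto. field_simplify; lra.
    + subst. specialize (HU nil (NoDup_nil _)). rewrite fsum_nil in HU. lra.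
Qed.

Lemma summable_scal (h : T -> R) a : 0 <= a -> summable h -> summable (fun y => a * h y).
Proof. intros Ha [M HM]. exists (a * M). intros l Hl. rewrite fsum_scal. apply Rmult_le_compat_l; auto. Qed.

Lemma summable_le (h g : T -> R) : (forall x, 0 <= h x <= g x) -> summable g -> summable h.
Proof. intros H [M HM]. exists M. intros l Hl. apply Rle_trans with (fsum l g); auto.
  apply fsum_le; intros; apply H. Qed.

Lemma summable_plus (h1 h2 : T -> R) : summable h1 -> summable h2 -> summable (fun x => h1 x + h2 x).
Proof. intros [M1 H1] [M2 H2]. exists (M1 + M2). intros l Hl. rewrite fsum_plus.
  specialize (H1 l Hl); specialize (H2 l Hl); lra. Qed.

Lemma tsum_plus (h1 h2 : T -> R) : (forall x, 0 <= h1 x) -> (forall x, 0 <= h2 x) -> summable h1 -> summable h2 ->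
  tsum (fun x => h1 x + h2 x) = tsum h1 + tsum h2.
Proof. intros P1 P2 S1 S2. apply tsum_unique.
  - intros l Hl. rewrite fsum_plus. pose proof (fsum_le_tsum h1 l S1 Hl). pose proof (fsum_le_tsum h2 l S2 Hl). lra.
  - intros U HU.
    assert (K : forall l1 l2, NoDup l1 -> NoDup l2 -> fsum l1 h1 + fsum l2 h2 <= U).
    { intros l1 l2 N1 N2. set (l3 := l1 ++ filter (notinb l1) l2).
      assert (N3 : NoDup l3).
      { apply NoDup_app; auto. apply NoDup_filter; auto.
        intros a Ha Ha'. apply filter_In in Ha'. destruct Ha' as [_ Ha']. unfold notinb, em in Ha'.
        destruct excluded_middle_informative; [discriminate|contradiction]. }
      assert (fsum l1 h1 <= fsum l3 h1). { apply fsum_incl; auto. intros x Hx; apply in_or_app; auto. }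
      assert (fsum l2 h2 <= fsum l3 h2).
      { apply fsum_incl; auto. intros x Hx. apply in_or_app. destruct (classic (In x l1)); auto.
        right. apply filter_In. split; auto. unfold notinb, em. destruct excluded_middle_informative; tauto. }
      specialize (HU l3 N3). rewrite fsum_plus in HU. lra. }
    assert (forall l2, NoDup l2 -> tsum h1 <= U - fsum l2 h2).
    { intros l2 N2. apply tsum_le_ub; auto. intros l1 N1. specialize (K l1 l2 N1 N2). lra. }
    assert (tsum h2 <= U - tsum h1).
    { apply tsum_le_ub; auto. intros l2 N2. specialize (H l2 N2). lra. }
    lra.
Qed.

Lemma tsum_zero : tsum (fun _ : T => 0) = 0.
Proof. apply tsum_unique. intros; rewrite fsum_zero; lra.
  intros U HU. specialize (HU nil (NoDup_nil _)). rewrite fsum_nil in HU. lra. Qed.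

Lemma tsum_fsum {J} (I : list J) (F : J -> T -> R) : (forall i x, 0 <= F i x) -> (forall i, summable (F i)) ->
  summable (fun x => fsum I (fun i => F i x)) /\ tsum (fun x => fsum I (fun i => F i x)) = fsum I (fun i => tsum (F i)).
Proof. intros HP HS. induction I as [|a I IH].
  - split. exists 0. intros; rewrite fsum_zero; lra. rewrite fsum_nil. apply tsum_zero.
  - destruct IH as [IS IE]. rewrite fsum_cons. rewrite <- IE.
    change (fun x => fsum (a :: I) (fun i => F i x)) with (fun x => F a x + fsum I (fun i => F i x)).
    split. apply summable_plus; auto.
    apply tsum_plus; auto. intros; apply fsum_nonneg; auto.
Qed.

End Ts.

Lemma tsum_swap {V} (h : V * V -> R) : summable h ->
  summable (fun p => h (snd p, fst p)) /\ tsum (fun p => h (snd p, fst p)) = tsum h.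
Proof. intros Hs.
  assert (E : forall l, fsum l (fun p => h (snd p, fst p)) = fsum (map (fun p => (snd p, fst p)) l) h).
  { intros; rewrite fsum_map; reflexivity. }
  assert (N : forall l : list (V*V), NoDup l -> NoDup (map (fun p => (snd p, fst p)) l)).
  { intros l Hl. apply NoDup_map_inj; auto. intros [a b] [c d] _ _ Heq. simpl in Heq. inversion Heq; auto. }
  assert (Hs' : summable (fun p => h (snd p, fst p))).
  { exists (tsum h). intros l Hl. rewrite E. apply fsum_le_tsum; auto. }
  split; auto. apply tsum_unique.
  - intros l Hl. rewrite E. apply fsum_le_tsum; auto.
  - intros U HU. apply tsum_le_ub; auto. intros l Hl.
    specialize (HU _ (N l Hl)). rewrite E, map_map in HU. rewrite map_ext with (g := fun x => x) in HU.
    rewrite map_id in HU; auto. intros [a b]; reflexivity.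
Qed.

Definition slice {V} (x0 : V) (k : V -> R) (p : V * V) : R := if em (fst p = x0) then k (snd p) else 0.

Lemma tsum_slice {V} (x0 : V) k : (forall y, 0 <= k y) -> summable k ->
  summable (slice x0 k) /\ tsum (slice x0 k) = tsum k.
Proof. intros Hk Hs.
  assert (E : forall l, fsum l (slice x0 k) = fsum (map snd (filter (fun p => if em (fst p = x0) then true else false) l)) k).
  { intros. rewrite fsum_map, fsum_filter. apply fsum_ext. intros. unfold slice. destruct em; reflexivity. }
  assert (N : forall l : list (V*V), NoDup l -> NoDup (map snd (filter (fun p => if em (fst p = x0) then true else false) l))).
  { intros l Hl. apply NoDup_map_inj. 2: apply NoDup_filter; auto.
    intros [a b] [c d] Ha Hc Heq. apply filter_In in Ha. apply filter_In in Hc. simpl in *.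
    destruct em in Ha; [|destruct Ha; discriminate]. destruct em in Hc; [|destruct Hc; discriminate]. subst; auto. }
  assert (Hs' : summable (slice x0 k)).
  { exists (tsum k). intros l Hl. rewrite E. apply fsum_le_tsum; auto. }
  split; auto. apply tsum_unique.
  - intros l Hl. rewrite E. apply fsum_le_tsum; auto.
  - intros U HU. apply tsum_le_ub; auto. intros l Hl.
    assert (NoDup (map (fun y => (x0, y)) l)).
    { apply NoDup_map_inj; auto. intros a b _ _ Heq; inversion Heq; auto. }
    specialize (HU _ H). rewrite fsum_map in HU. unfold slice in HU. simpl in HU.
    erewrite fsum_ext; [exact HU|]. intros x _. destruct em; [reflexivity|congruence].
Qed.

Section Co.
Context {T : Type}.

Definition posb (g : T -> R) (x : T) : bool := if Rlt_dec 0 (g x) then true else false.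

Lemma list_min (g : T -> R) (a : T) (W : list T) : exists x0, In x0 (a::W) /\ forall x, In x (a::W) -> g x0 <= g x.
Proof. revert a; induction W as [|w W IH]; intros a.
  - exists a. split; [left; auto|]. intros x [->|[]]; lra.
  - destruct (IH w) as [x1 [H1 H2]]. destruct (Rle_dec (g a) (g x1)).
    + exists a. split; [left; auto|]. intros x [->|Hx]; [lra|]. specialize (H2 x Hx); lra.
    + exists x1. split; [right; auto|]. intros x [->|Hx]; [lra|]. auto.
Qed.

Lemma filter_length_lt (p q : T -> bool) (L : list T) :
  (forall x, In x L -> q x = true -> p x = true) -> (exists x0, In x0 L /\ p x0 = true /\ q x0 = false) ->
  (length (filter q L) < length (filter p L))%nat.
Proof.
  assert (mono : forall L, (forall x, In x L -> q x = true -> p x = true) -> (length (filter q L) <= length (filter p L))%nat).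
  { induction L0 as [|a L0 IH]; intros H; simpl; [lia|].
    assert (IH' : (length (filter q L0) <= length (filter p L0))%nat) by (apply IH; intros; apply H; simpl; auto).
    destruct (q a) eqn:Eq, (p a) eqn:Ep; simpl; try lia. rewrite H in Ep; [discriminate|left; auto|auto]. }
  induction L as [|a L IH]; intros H [x0 [Hx0 [Hp Hq]]]; [destruct Hx0|].
  simpl. destruct (p a) eqn:Ep, (q a) eqn:Eq; simpl.
  - assert (length (filter q L) < length (filter p L))%nat; [|lia].
    apply IH. intros; apply H; simpl; auto. destruct Hx0 as [->|Hx0]; [congruence|]. exists x0; auto.
  - assert (length (filter q L) <= length (filter p L))%nat; [|lia]. apply mono; intros; apply H; simpl; auto.
  - rewrite H in Ep; [discriminate|left; auto|auto].
  - apply IH. intros; apply H; simpl; auto. destruct Hx0 as [->|Hx0]; [congruence|]. exists x0; auto.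
Qed.

Lemma coarea_zero (L : list T) B C M α g : (forall x y, 0 <= B x y) -> (forall x, 0 <= C x) ->
  (forall x, 0 <= g x) -> filter (posb g) L = nil ->
  α * fsum L (fun x => M x * g x) <= fsum L (fun x => fsum L (fun y => /2 * B x y * Rabs (g x - g y))) + fsum L (fun x => C x * g x).
Proof. intros HB HC Hg Hf.
  assert (Z : forall x, In x L -> g x = 0).
  { intros x Hx. destruct (Rlt_dec 0 (g x)). assert (In x (filter (posb g) L)).
    apply filter_In; split; auto. unfold posb; destruct Rlt_dec; auto; lra. rewrite Hf in H; destruct H.
    specialize (Hg x); lra. }
  rewrite (fsum_ext L (fun x => M x * g x) (fun _ => 0)) by (intros x Hx; rewrite Z; auto; ring).
  rewrite fsum_zero.
  assert (0 <= fsum L (fun x => fsum L (fun y => /2 * B x y * Rabs (g x - g y)))).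
  { apply fsum_nonneg; intros; apply fsum_nonneg; intros. specialize (HB x x0). pose proof (Rabs_pos (g x - g x0)).
    apply Rmult_le_pos; [|auto]. lra. }
  assert (0 <= fsum L (fun x => C x * g x)).
  { apply fsum_nonneg; intros. apply Rmult_le_pos; auto. }
  lra.
Qed.

Lemma coarea (L : list T) B C M α : (forall x y, 0 <= B x y) -> (forall x y, B x y = B y x) -> (forall x, 0 <= C x) ->
  (forall p : T -> bool, (exists x, In x L /\ p x = true) ->
     α * fsum L (fun x => if p x then M x else 0) <=
     fsum L (fun x => if p x then fsum L (fun y => if p y then 0 else B x y) + C x else 0)) ->
  forall g, (forall x, 0 <= g x) ->
  α * fsum L (fun x => M x * g x) <= fsum L (fun x => fsum L (fun y => /2 * B x y * Rabs (g x - g y))) + fsum L (fun x => C x * g x).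
Proof.
  intros HB Hsym HC H g Hg.
  remember (length (filter (posb g) L)) as n eqn:En. assert (Hn : (length (filter (posb g) L) <= n)%nat) by lia.
  clear En. revert g Hg Hn. induction n as [|n IH]; intros g Hg Hn.
  { apply coarea_zero; auto. destruct (filter (posb g) L); auto. simpl in Hn; lia. }
  destruct (filter (posb g) L) as [|a W] eqn:EF.
  { apply coarea_zero; auto. }
  destruct (list_min g a W) as [x0 [Hx0 Hmin]]. rewrite <- EF in Hx0, Hmin.
  apply filter_In in Hx0 as [Hx0L Hx0p].
  set (m := g x0). assert (Hm : 0 < m). { unfold m, posb in *. destruct Rlt_dec; [auto|discriminate]. }
  set (p := posb g).
  set (g' := fun x => Rmax 0 (g x - m)).
  assert (Hg' : forall x, 0 <= g' x) by (intros; apply Rmax_l).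
  assert (F : forall x, In x L -> (p x = true /\ g' x = g x - m /\ 0 <= g' x) \/ (p x = false /\ g x = 0 /\ g' x = 0)).
  { intros x Hx. unfold p, posb. destruct Rlt_dec.
    - left. assert (m <= g x). { apply Hmin. apply filter_In; split; auto. unfold posb; destruct Rlt_dec; auto; lra. }
      unfold g'. rewrite Rmax_right by lra. repeat split; lra.
    - right. assert (g x = 0) by (specialize (Hg x); lra). unfold g'. rewrite H0, Rmax_left by lra. auto. }
  assert (IH' : α * fsum L (fun x => M x * g' x) <= fsum L (fun x => fsum L (fun y => /2 * B x y * Rabs (g' x - g' y))) + fsum L (fun x => C x * g' x)).
  { apply IH; auto. cut (length (filter (posb g') L) < length (filter (posb g) L))%nat. { rewrite EF; simpl in *; lia. }
    apply filter_length_lt.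
    - intros x Hx Hq. unfold posb in *. destruct (Rlt_dec 0 (g' x)); [|discriminate].
      destruct (F x Hx) as [[A1 [A2 A3]]|[A1 [A2 A3]]]. destruct Rlt_dec; auto; lra. lra.
    - exists x0. split; auto. split; auto. unfold posb. destruct Rlt_dec; auto.
      destruct (F x0 Hx0L) as [[A1 [A2 A3]]|[A1 [A2 A3]]]; [|unfold p in A1; congruence]. unfold m in A2. lra. }
  assert (Hp : α * fsum L (fun x => if p x then M x else 0) <=
     fsum L (fun x => if p x then fsum L (fun y => if p y then 0 else B x y) + C x else 0)).
  { apply H. exists x0; auto. }
  assert (E1 : fsum L (fun x => M x * g x) = fsum L (fun x => M x * g' x) + m * fsum L (fun x => if p x then M x else 0)).
  { rewrite <- fsum_scal, <- fsum_plus. apply fsum_ext. intros x Hx.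
    destruct (F x Hx) as [[A1 [A2 A3]]|[A1 [A2 A3]]]; rewrite A1; [rewrite A2|rewrite A2, A3]; ring. }
  assert (E2 : fsum L (fun x => C x * g x) = fsum L (fun x => C x * g' x) + m * fsum L (fun x => if p x then C x else 0)).
  { rewrite <- fsum_scal, <- fsum_plus. apply fsum_ext. intros x Hx.
    destruct (F x Hx) as [[A1 [A2 A3]]|[A1 [A2 A3]]]; rewrite A1; [rewrite A2|rewrite A2, A3]; ring. }
  set (E1f := fun x y => if p x then (if p y then 0 else B x y) else 0).
  set (E2f := fun x y => if p y then (if p x then 0 else B x y) else 0).
  assert (E3 : fsum L (fun x => fsum L (fun y => /2 * B x y * Rabs (g x - g y))) =
     fsum L (fun x => fsum L (fun y => /2 * B x y * Rabs (g' x - g' y))) +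
     m / 2 * (fsum L (fun x => fsum L (fun y => E1f x y)) + fsum L (fun x => fsum L (fun y => E2f x y)))).
  { rewrite <- fsum_plus, <- fsum_scal, <- fsum_plus. apply fsum_ext. intros x Hx.
    rewrite <- fsum_plus, <- fsum_scal, <- fsum_plus. apply fsum_ext. intros y Hy.
    unfold E1f, E2f.
    destruct (F x Hx) as [[A1 [A2 A3]]|[A1 [A2 A3]]]; destruct (F y Hy) as [[B1 [B2 B3]]|[B1 [B2 B3]]];
      rewrite A1, B1; cbv beta iota.
    - replace (g x - g y) with (g' x - g' y) by lra. field.
    - rewrite B2, B3. rewrite !Rminus_0_r. rewrite !Rabs_pos_eq by lra. rewrite A2. field.
    - rewrite A2, A3. rewrite !Rminus_0_l, !Rabs_Ropp. rewrite !Rabs_pos_eq by lra. rewrite B2. field.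
    - rewrite A2, A3, B2, B3. field. }
  assert (E4 : fsum L (fun x => fsum L (fun y => E2f x y)) = fsum L (fun x => fsum L (fun y => E1f x y))).
  { rewrite fsum_exchange. apply fsum_ext; intros x _. apply fsum_ext; intros y _. unfold E1f, E2f. rewrite Hsym. reflexivity. }
  assert (E5 : fsum L (fun x => fsum L (fun y => E1f x y)) = fsum L (fun x => if p x then fsum L (fun y => if p y then 0 else B x y) else 0)).
  { apply fsum_ext; intros x _. unfold E1f. destruct (p x); auto. apply fsum_zero. }
  assert (E6 : fsum L (fun x => if p x then fsum L (fun y => if p y then 0 else B x y) + C x else 0) =
     fsum L (fun x => if p x then fsum L (fun y => if p y then 0 else B x y) else 0) + fsum L (fun x => if p x then C x else 0)).
  { rewrite <- fsum_plus. apply fsum_ext; intros x _. destruct (p x); ring. }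
  rewrite E1, E2, E3, E4, E5. rewrite E6 in Hp.
  assert (m * (α * fsum L (fun x => if p x then M x else 0)) <= m * (fsum L (fun x => if p x then fsum L (fun y => if p y then 0 else B x y) else 0) + fsum L (fun x => if p x then C x else 0))).
  { apply Rmult_le_compat_l; lra. }
  nra.
Qed.

End Co.

Definition csok (S P Q : R) : Prop := 0 <= S /\ 0 <= P /\ 0 <= Q /\ S ^ 2 <= P * Q.

Lemma sq_le_imp (a b : R) : 0 <= b -> a ^ 2 <= b ^ 2 -> a <= b.
Proof. intros Hb H. destruct (Rle_dec a b); auto. nra. Qed.

Lemma cs2 S1 P1 R1 S2 P2 R2 : csok S1 P1 R1 -> csok S2 P2 R2 -> csok (S1+S2) (P1+P2) (R1+R2).
Proof. intros [a1 [b1 [c1 d1]]] [a2 [b2 [c2 d2]]].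
  assert (e1 : (S1*S2)^2 <= (P1*R2)*(P2*R1)).
  { replace ((S1*S2)^2) with (S1^2 * S2^2) by ring. replace ((P1*R2)*(P2*R1)) with ((P1*R1)*(P2*R2)) by ring.
    apply Rmult_le_compat; auto; apply pow2_ge_0. }
  assert (e2 : (P1*R2)*(P2*R1) <= ((P1*R2+P2*R1)/2)^2).
  { set (X := P1*R2). set (Y := P2*R1). assert (0 <= (X-Y)^2) by apply pow2_ge_0.
    assert (((X+Y)/2)^2 - X*Y = (X-Y)^2/4) by field. lra. }
  assert (e3 : S1*S2 <= (P1*R2+P2*R1)/2).
  { assert (0 <= P1*R2) by (apply Rmult_le_pos; auto). assert (0 <= P2*R1) by (apply Rmult_le_pos; auto).
    apply sq_le_imp; lra. }
  assert ((S1+S2)^2 = S1^2 + 2*(S1*S2) + S2^2) by ring.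
  assert ((P1+P2)*(R1+R2) = P1*R1 + (P1*R2+P2*R1) + P2*R2) by ring. unfold csok. repeat split; lra. Qed.

Lemma csok_fsum {T} (l : list T) s p r : (forall x, In x l -> csok (s x) (p x) (r x)) ->
  csok (fsum l s) (fsum l p) (fsum l r).
Proof. induction l; intros H. rewrite !fsum_nil. repeat split; lra.
  rewrite !fsum_cons. apply cs2. apply H; left; auto. apply IHl; intros; apply H; right; auto. Qed.

Lemma final_alg α N A Q Qt : 0 <= α -> 0 <= N -> α * N <= A -> csok A Q Qt -> Q + Qt = 2 * N ->
  (1 - sqrt (1 - α ^ 2)) * N <= Q /\ Q <= (1 + sqrt (1 - α ^ 2)) * N.
Proof. intros Ha HN H1 [c1 [c2 [c3 c4]]] HS.
  set (s := sqrt (1 - α^2)).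
  assert (Hs0 : 0 <= s) by apply sqrt_pos.
  assert (Hs : 1 - α^2 <= s ^ 2).
  { unfold s. destruct (Rle_dec 0 (1 - α^2)).
    - replace (sqrt (1 - α^2) ^ 2) with (sqrt (1 - α^2) * sqrt (1 - α^2)) by ring. rewrite sqrt_sqrt; lra.
    - rewrite sqrt_neg_0 by lra. lra. }
  assert (HaN : 0 <= α * N) by (apply Rmult_le_pos; auto).
  assert (E1 : (α * N)^2 <= A^2) by (apply pow_incr; lra).
  assert (E2 : (Q - N)^2 <= (s * N)^2).
  { assert (Qt = 2*N - Q) by lra. subst Qt.
    assert ((Q - N)^2 = N^2 - Q * (2*N - Q)) by ring.
    assert ((α*N)^2 = α^2 * N^2) by ring.
    assert ((s*N)^2 = s^2 * N^2) by ring.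
    assert (N^2 * (1 - α^2) <= N^2 * s^2) by (apply Rmult_le_compat_l; [apply pow2_ge_0|lra]).
    nra. }
  assert (HsN : 0 <= s * N) by (apply Rmult_le_pos; auto).
  assert (Q - N <= s * N) by (apply sq_le_imp; auto).
  assert (N - Q <= s * N) by (apply sq_le_imp; auto; replace ((N-Q)^2) with ((Q-N)^2) by ring; auto).
  split; nra.
Qed.

Lemma csok_term w a b : 0 <= w -> csok (w * Rabs (a^2 - b^2)) (w * (a - b)^2) (w * (a + b)^2).
Proof. intros Hw. unfold csok. repeat split.
  - apply Rmult_le_pos; auto; apply Rabs_pos.
  - apply Rmult_le_pos; auto; apply pow2_ge_0.
  - apply Rmult_le_pos; auto; apply pow2_ge_0.
  - right. replace ((w * Rabs (a^2 - b^2))^2) with (w^2 * (Rabs (a^2-b^2))^2) by ring.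
    rewrite pow2_abs. ring. Qed.

Lemma csok_diag z : 0 <= z -> csok z z z.
Proof. intros; unfold csok; repeat split; auto. right; ring. Qed.

Lemma finite_main {T} (L : list T) B C M (f : T -> R) α : (forall x y, 0 <= B x y) -> (forall x y, B x y = B y x) ->
  (forall x, 0 <= C x) -> 0 <= α -> (forall x, M x = fsum L (B x) + C x) ->
  (forall p : T -> bool, (exists x, In x L /\ p x = true) ->
     α * fsum L (fun x => if p x then M x else 0) <=
     fsum L (fun x => if p x then fsum L (fun y => if p y then 0 else B x y) + C x else 0)) ->
  (1 - sqrt (1 - α ^ 2)) * fsum L (fun x => M x * f x ^ 2) <=
     fsum L (fun x => fsum L (fun y => /2 * B x y * (f x - f y)^2)) + fsum L (fun x => C x * f x^2) /\
  fsum L (fun x => fsum L (fun y => /2 * B x y * (f x - f y)^2)) + fsum L (fun x => C x * f x^2) <=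
     (1 + sqrt (1 - α ^ 2)) * fsum L (fun x => M x * f x ^ 2).
Proof. intros HB Hsym HC Ha HM Hco.
  pose proof (coarea L B C M α HB Hsym HC Hco (fun x => f x ^ 2) (fun x => pow2_ge_0 (f x))) as Hca.
  cbv beta in Hca.
  apply final_alg with (A := fsum L (fun x => fsum L (fun y => / 2 * B x y * Rabs (f x ^ 2 - f y ^ 2))) + fsum L (fun x => C x * f x ^ 2))
    (Qt := fsum L (fun x => fsum L (fun y => /2 * B x y * (f x + f y)^2)) + fsum L (fun x => C x * f x^2)); auto.
  - apply fsum_nonneg; intros x _. apply Rmult_le_pos; [|apply pow2_ge_0]. rewrite HM.
    apply Rplus_le_le_0_compat; auto. apply fsum_nonneg; auto.
  - apply cs2; apply csok_fsum; intros x _.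
    + apply csok_fsum; intros y _. apply csok_term. specialize (HB x y); lra.
    + apply csok_diag. apply Rmult_le_pos; auto; apply pow2_ge_0.
  - assert (E1 : fsum L (fun x => fsum L (fun y => /2 * B x y * (f x - f y)^2)) + fsum L (fun x => fsum L (fun y => /2 * B x y * (f x + f y)^2)) =
       fsum L (fun x => fsum L (fun y => B x y * f x^2)) + fsum L (fun x => fsum L (fun y => B x y * f y^2))).
    { rewrite <- !fsum_plus. apply fsum_ext; intros x _. rewrite <- !fsum_plus. apply fsum_ext; intros y _. field. }
    assert (E2 : fsum L (fun x => fsum L (fun y => B x y * f y^2)) = fsum L (fun x => fsum L (fun y => B x y * f x^2))).
    { rewrite fsum_exchange. apply fsum_ext; intros x _. apply fsum_ext; intros y _. rewrite Hsym. reflexivity. }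
    assert (E3 : fsum L (fun x => fsum L (fun y => B x y * f x^2)) + fsum L (fun x => C x * f x ^ 2) = fsum L (fun x => M x * f x ^ 2)).
    { rewrite <- fsum_plus. apply fsum_ext; intros x _. rewrite HM.
      rewrite (fsum_ext L (fun y => B x y * f x ^ 2) (fun y => f x ^ 2 * B x y)) by (intros; ring).
      rewrite fsum_scal. ring. }
    lra.
Qed.

Lemma fsum_delta {T} (L : list T) (x : T) (F : T -> R) : NoDup L ->
  fsum L (fun x0 => if em (x = x0) then F x0 else 0) = if em (In x L) then F x else 0.
Proof. induction L as [|a L IH]; intros HL.
  - rewrite fsum_nil. destruct em as [[]|]; auto.
  - inversion HL; subst. rewrite fsum_cons. destruct (em (x = a)) as [->|Hne].
    + rewrite (fsum_ext L _ (fun _ => 0)). rewrite fsum_zero.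
      destruct (em (In a (a :: L))) as [_|C2]; [ring | exfalso; apply C2; left; auto].
      intros y Hy. destruct (em (a = y)); [subst; contradiction | reflexivity].
    + rewrite IH; auto. destruct (em (x = a)) as [C|_]; [contradiction|]. destruct (em (In x L)), (em (In x (a :: L))); try ring.
      exfalso; apply n; right; auto. exfalso. destruct i as [->|]; auto.
Qed.

Section G.
Context {V : Type} (b : V -> V -> R) (c : V -> R) (Hg : is_weighted_graph b c).

Lemma b_nn x y : 0 <= b x y. Proof. apply Hg. Qed.
Lemma c_nn x : 0 <= c x. Proof. apply Hg. Qed.
Lemma b_sym x y : b x y = b y x. Proof. apply Hg. Qed.
Lemma b_sum x : summable (b x). Proof. apply Hg. Qed.

Definition tlw (L : list V) (x : V) : R := tsum (fun y => b x y * indW L y).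

Lemma tl_nn L x : 0 <= tlw L x.
Proof. apply tsum_nonneg. apply summable_ind. apply b_nn. apply b_sum. Qed.

Lemma nw_eq L x : NoDup L -> nw b c x = fsum L (b x) + (c x + tlw L x).
Proof. intros HL. unfold nw, tlw. rewrite (tsum_split (b x) L); auto. lra. apply b_nn. apply b_sum. Qed.

Lemma bdry_term L (p : V -> bool) x : NoDup L ->
  tsum (fun y => b x y * indW (filter p L) y) = fsum L (fun y => if p y then 0 else b x y) + tlw L x.
Proof. intros HL.
  pose proof (tsum_split (b x) (filter p L) (b_nn x) (b_sum x) (NoDup_filter _ HL)) as E1.
  pose proof (tsum_split (b x) L (b_nn x) (b_sum x) HL) as E2.
  rewrite fsum_filter in E1. rewrite (fsum_split p L) in E2. unfold tlw. lra. Qed.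

Lemma nw_pos_nn (Hn : forall x, 0 < nw b c x) x : 0 <= nw b c x.
Proof. apply Rlt_le, Hn. Qed.

Lemma bdry_nn W : 0 <= bdry b c W.
Proof. unfold bdry. apply Rplus_le_le_0_compat; apply fsum_nonneg; intros.
  apply tsum_nonneg. apply (summable_ind (b x) W (b_nn x) (b_sum x)). apply c_nn. Qed.

Lemma alpha_props (v0 : V) (Hn : forall x, 0 < nw b c x) :
  0 <= alpha b c (fun _ => True) /\
  forall W, NoDup W -> W <> nil -> alpha b c (fun _ => True) * nW (nw b c) W <= bdry b c W.
Proof.
  set (E := fun r => ratios b c (fun _ => True) (- r)).
  assert (Hpos : forall W, W <> nil -> 0 < nW (nw b c) W). { intros W HW. unfold nW. apply fsum_pos; auto. }
  assert (Hub : forall r, E r -> r <= 0).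
  { intros r [W [HW [Hne [_ Hr]]]]. assert (0 <= bdry b c W / nW (nw b c) W).
    { apply Rmult_le_pos. apply bdry_nn. apply Rlt_le, Rinv_0_lt_compat, Hpos; auto. } lra. }
  assert (Hin : forall W, NoDup W -> W <> nil -> E (- (bdry b c W / nW (nw b c) W))).
  { intros W HW Hne. exists W. repeat split; auto. ring. }
  assert (Hlub : is_lub E (epsilon (inhabits 0) (fun s => is_lub E s))).
  { apply epsilon_spec. destruct (completeness E) as [m Hm].
    - exists 0. intros r Hr; auto.
    - exists (- (bdry b c (v0::nil) / nW (nw b c) (v0::nil))). apply Hin. repeat constructor; simpl; auto. discriminate.
    - exists m; auto. }
  unfold alpha. fold E. set (e := epsilon (inhabits 0) (fun s => is_lub E s)) in *.
  split.
  - assert (e <= 0) by (apply (proj2 Hlub); intros r Hr; auto). lra.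
  - intros W HW Hne. assert (- (bdry b c W / nW (nw b c) W) <= e) by (apply (proj1 Hlub); auto).
    assert (0 < nW (nw b c) W) by auto.
    assert (- e <= bdry b c W / nW (nw b c) W) by lra.
    apply (Rmult_le_compat_r (nW (nw b c) W)) in H1; [|lra]. unfold Rdiv in H1. rewrite Rmult_assoc, Rinv_l in H1; lra.
Qed.

Lemma coarea_hyp L α (HL : NoDup L) (Hα : forall W, NoDup W -> W <> nil -> α * nW (nw b c) W <= bdry b c W) :
  forall p : V -> bool, (exists x, In x L /\ p x = true) ->
     α * fsum L (fun x => if p x then nw b c x else 0) <=
     fsum L (fun x => if p x then fsum L (fun y => if p y then 0 else b x y) + (c x + tlw L x) else 0).
Proof. intros p [x [Hx Hp]].
  assert (Hne : filter p L <> nil). { intros E. assert (In x (filter p L)) by (apply filter_In; auto). rewrite E in H; auto. }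
  specialize (Hα (filter p L) (NoDup_filter _ HL) Hne). unfold nW, bdry in Hα. rewrite !fsum_filter in Hα.
  eapply Rle_trans; [exact Hα|]. right. rewrite <- fsum_plus. apply fsum_ext. intros y _.
  destruct (p y); [|ring]. change (tsum (fun y0 => b y y0 * indW (filter p L) y0) + c y = fsum L (fun y0 => if p y0 then 0 else b y y0) + (c y + tlw L y)).
  rewrite bdry_term; auto. ring.
Qed.

End G.

Section G2.
Context {V : Type} (b : V -> V -> R) (c : V -> R) (Hg : is_weighted_graph b c).

Lemma slice_nn (x0 : V) k : (forall y, 0 <= k y) -> forall p, 0 <= slice x0 k p.
Proof. intros H p. unfold slice. destruct em; auto; lra. Qed.

Lemma Qmax_fin (L : list V) (f : V -> R) : NoDup L -> (forall x, ~ In x L -> f x = 0) ->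
  Qmax b c f = fsum L (fun x => fsum L (fun y => /2 * b x y * (f x - f y)^2)) + fsum L (fun x => (c x + tlw b L x) * f x^2).
Proof. intros HL Hf.
  set (kf := fun x0 y => b x0 y * (f x0 - f y)^2).
  set (jf := fun y0 x => f y0 ^ 2 * (b y0 x * indW L x)).
  assert (kf_nn : forall x0 y, 0 <= kf x0 y). { intros; unfold kf. apply Rmult_le_pos; [apply (b_nn b c Hg)|apply pow2_ge_0]. }
  assert (jf_nn : forall x0 y, 0 <= jf x0 y).
  { intros; unfold jf. apply Rmult_le_pos; [apply pow2_ge_0|]. apply Rmult_le_pos; [apply (b_nn b c Hg)|].
    unfold indW; destruct excluded_middle_informative; lra. }
  set (S := fsum L (fun x => f x ^ 2)).
  assert (fS : forall y, f y ^ 2 <= S).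
  { intros y. destruct (classic (In y L)).
    - unfold S. replace (f y ^ 2) with (fsum (y :: nil) (fun x => f x ^ 2)) by (rewrite fsum_cons, fsum_nil; ring).
      apply fsum_incl. repeat constructor; auto. intros z [->|[]]; auto. intros; apply pow2_ge_0.
    - rewrite Hf by auto. unfold S. replace (0 ^ 2) with 0 by ring. apply fsum_nonneg; intros; apply pow2_ge_0. }
  assert (kf_s : forall x0, summable (kf x0)).
  { intros x0. apply summable_le with (g := fun y => (2 * f x0 ^ 2 + 2 * S) * b x0 y).
    - intros y. split; auto. unfold kf. rewrite Rmult_comm. apply Rmult_le_compat_r. apply (b_nn b c Hg).
      pose proof (fS y). assert (0 <= (f x0 + f y)^2) by apply pow2_ge_0. nra.
    - apply summable_scal. pose proof (fS x0). pose proof (pow2_ge_0 (f x0)). lra. apply (b_sum b c Hg). }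
  assert (jf_s : forall y0, summable (jf y0)).
  { intros y0. apply summable_scal. apply pow2_ge_0. apply summable_ind. apply (b_nn b c Hg). apply (b_sum b c Hg). }
  assert (Pe : (fun p : V * V => b (fst p) (snd p) * (f (fst p) - f (snd p)) ^ 2) =
     (fun p => fsum L (fun x0 => slice x0 (kf x0) p) + (fun q => fsum L (fun y0 => slice y0 (jf y0) q)) (snd p, fst p))).
  { apply functional_extensionality. intros [x y]. simpl. unfold slice. simpl.
    rewrite (fsum_delta L x (fun x0 => kf x0 y)) by auto. rewrite (fsum_delta L y (fun y0 => jf y0 x)) by auto.
    unfold kf, jf, indW. destruct (em (In x L)) as [Hx|Hx]; destruct (em (In y L)) as [Hy|Hy];
      destruct (excluded_middle_informative (In x L)); try contradiction.
    - ring.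
    - ring.
    - rewrite (Hf x Hx). rewrite (b_sym b c Hg x y). ring.
    - rewrite (Hf x Hx), (Hf y Hy). ring. }
  assert (T1 : tsum (fun p : V*V => fsum L (fun x0 => slice x0 (kf x0) p)) = fsum L (fun x0 => tsum (kf x0))).
  { rewrite (proj2 (tsum_fsum L (fun x0 => slice x0 (kf x0)) (fun i => slice_nn i (kf i) (kf_nn i)) (fun i => proj1 (tsum_slice i (kf i) (kf_nn i) (kf_s i))))).
    apply fsum_ext. intros; apply tsum_slice; auto. }
  assert (S1 : summable (fun p : V*V => fsum L (fun x0 => slice x0 (kf x0) p))).
  { apply (tsum_fsum L (fun x0 => slice x0 (kf x0)) (fun i => slice_nn i (kf i) (kf_nn i)) (fun i => proj1 (tsum_slice i (kf i) (kf_nn i) (kf_s i)))). }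
  set (G := fun q : V * V => fsum L (fun y0 => slice y0 (jf y0) q)).
  assert (SG : summable G /\ tsum G = fsum L (fun y0 => tsum (jf y0))).
  { destruct (tsum_fsum L (fun y0 => slice y0 (jf y0)) (fun i => slice_nn i (jf i) (jf_nn i)) (fun i => proj1 (tsum_slice i (jf i) (jf_nn i) (jf_s i)))) as [A1 A2].
    split; auto. unfold G. rewrite A2. apply fsum_ext. intros; apply tsum_slice; auto. }
  destruct SG as [SG1 SG2].
  destruct (tsum_swap G SG1) as [SW1 SW2].
  assert (Gnn : forall q, 0 <= G q). { intros; unfold G; apply fsum_nonneg; intros; apply slice_nn; auto. }
  assert (Ekf : forall x0, tsum (kf x0) = fsum L (kf x0) + f x0 ^ 2 * tlw b L x0).
  { intros x0. rewrite (tsum_split (kf x0) L); auto. f_equal.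
    unfold tlw. rewrite <- tsum_scal. 2: apply pow2_ge_0. 2: apply summable_ind; [apply (b_nn b c Hg)|apply (b_sum b c Hg)].
    f_equal. apply functional_extensionality. intros y. unfold kf, indW. destruct excluded_middle_informative. ring.
    rewrite (Hf y n). ring. }
  assert (Ejf : forall y0, tsum (jf y0) = f y0 ^ 2 * tlw b L y0).
  { intros y0. unfold jf, tlw. apply tsum_scal. apply pow2_ge_0. apply summable_ind; [apply (b_nn b c Hg)|apply (b_sum b c Hg)]. }
  unfold Qmax. rewrite Pe.
  rewrite (tsum_plus _ (fun p => G (snd p, fst p))); auto.
  2: intros; apply fsum_nonneg; intros; apply slice_nn; auto.
  rewrite T1. change (fun q : V * V => fsum L (fun y0 => slice y0 (jf y0) q)) with G. rewrite SW2, SG2.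
  assert (Ec : tsum (fun x => c x * f x ^ 2) = fsum L (fun x => c x * f x ^ 2)).
  { apply tsum_fin; auto. intros; apply Rmult_le_pos; [apply (c_nn b c Hg)|apply pow2_ge_0].
    intros x Hx; rewrite (Hf x Hx); ring. }
  rewrite Ec.
  rewrite (fsum_ext L (fun x0 => tsum (kf x0)) (fun x0 => fsum L (kf x0) + f x0 ^ 2 * tlw b L x0)) by (intros; apply Ekf).
  rewrite (fsum_ext L (fun y0 => tsum (jf y0)) (fun y0 => f y0 ^ 2 * tlw b L y0)) by (intros; apply Ejf).
  rewrite fsum_plus.
  assert (fsum L (fun x => fsum L (fun y => /2 * b x y * (f x - f y)^2)) = /2 * fsum L (fun x0 => fsum L (kf x0))).
  { rewrite <- fsum_scal. apply fsum_ext; intros. rewrite <- fsum_scal. apply fsum_ext; intros. unfold kf. ring. }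
  assert (fsum L (fun x => (c x + tlw b L x) * f x^2) = fsum L (fun x => c x * f x^2) + fsum L (fun x => f x ^ 2 * tlw b L x)).
  { rewrite <- fsum_plus. apply fsum_ext; intros. ring. }
  lra.
Qed.

End G2.

Lemma graph_fin {V} (b : V -> V -> R) c (Hg : is_weighted_graph b c) (v0 : V) (Hn : forall x, 0 < nw b c x)
  (f : V -> R) L : NoDup L -> (forall x, ~ In x L -> f x = 0) ->
  (1 - sqrt (1 - (alpha b c (fun _ => True)) ^ 2)) * nrm2 (nw b c) f <= Qmax b c f /\
  Qmax b c f <= (1 + sqrt (1 - (alpha b c (fun _ => True)) ^ 2)) * nrm2 (nw b c) f.
Proof. intros HL Hf.
  destruct (alpha_props b c Hg v0 Hn) as [Ha Hα].
  assert (EN : nrm2 (nw b c) f = fsum L (fun x => nw b c x * f x ^ 2)).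
  { apply tsum_fin; auto. intros; apply Rmult_le_pos; [apply Rlt_le, Hn|apply pow2_ge_0].
    intros x Hx; rewrite (Hf x Hx); ring. }
  rewrite EN, (Qmax_fin b c Hg L f HL Hf).
  apply (finite_main L b (fun x => c x + tlw b L x) (nw b c) f).
  - apply (b_nn b c Hg).
  - apply (b_sym b c Hg).
  - intros; apply Rplus_le_le_0_compat; [apply (c_nn b c Hg)|apply (tl_nn b c Hg)].
  - auto.
  - intros; apply (nw_eq b c Hg); auto.
  - apply coarea_hyp; auto.
Qed.

Lemma csok_abs n a b : 0 <= n -> csok (n * (Rabs a * Rabs b)) (n * a ^ 2) (n * b ^ 2).
Proof. intros Hn. unfold csok. repeat split.
  - apply Rmult_le_pos; auto. apply Rmult_le_pos; apply Rabs_pos.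
  - apply Rmult_le_pos; auto; apply pow2_ge_0.
  - apply Rmult_le_pos; auto; apply pow2_ge_0.
  - right. rewrite <- (pow2_abs a), <- (pow2_abs b). ring. Qed.

Lemma l2_add {V} (n a b : V -> R) : (forall x, 0 <= n x) -> summable (fun x => n x * a x ^ 2) -> summable (fun x => n x * b x ^ 2) ->
  summable (fun x => n x * (a x + b x) ^ 2) /\
  sqrt (tsum (fun x => n x * (a x + b x) ^ 2)) <= sqrt (tsum (fun x => n x * a x ^ 2)) + sqrt (tsum (fun x => n x * b x ^ 2)).
Proof. intros Hn Sa Sb.
  set (Ta := tsum (fun x => n x * a x ^ 2)). set (Tb := tsum (fun x => n x * b x ^ 2)).
  assert (Hfin : forall l, NoDup l -> fsum l (fun x => n x * (a x + b x) ^ 2) <= (sqrt Ta + sqrt Tb) ^ 2).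
  { intros l Hl.
    set (P := fsum l (fun x => n x * a x ^ 2)). set (Q := fsum l (fun x => n x * b x ^ 2)).
    set (X := fsum l (fun x => n x * (Rabs (a x) * Rabs (b x)))).
    assert (Hc : csok X P Q) by (apply csok_fsum; intros; apply csok_abs; auto).
    destruct Hc as [c1 [c2 [c3 c4]]].
    assert (HX : X <= sqrt P * sqrt Q).
    { apply sq_le_imp. apply Rmult_le_pos; apply sqrt_pos.
      replace ((sqrt P * sqrt Q)^2) with ((sqrt P * sqrt P) * (sqrt Q * sqrt Q)) by ring. rewrite !sqrt_sqrt; auto. }
    assert (H1 : fsum l (fun x => n x * (a x + b x) ^ 2) <= P + 2 * X + Q).
    { unfold P, Q, X. rewrite <- fsum_scal, <- !fsum_plus. apply fsum_le. intros x _.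
      pose proof (Rle_abs (a x * b x)). rewrite Rabs_mult in H. specialize (Hn x).
      assert (n x * (a x * b x) <= n x * (Rabs (a x) * Rabs (b x))) by (apply Rmult_le_compat_l; auto). nra. }
    assert (HP : sqrt P <= sqrt Ta) by (apply sqrt_le_1_alt, fsum_le_tsum; auto).
    assert (HQ : sqrt Q <= sqrt Tb) by (apply sqrt_le_1_alt, fsum_le_tsum; auto).
    assert (E : (sqrt P + sqrt Q) ^ 2 = P + 2 * (sqrt P * sqrt Q) + Q).
    { replace ((sqrt P + sqrt Q) ^ 2) with (sqrt P * sqrt P + 2 * (sqrt P * sqrt Q) + sqrt Q * sqrt Q) by ring.
      rewrite !sqrt_sqrt; auto. }
    assert ((sqrt P + sqrt Q) ^ 2 <= (sqrt Ta + sqrt Tb) ^ 2).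
    { apply pow_incr. split. apply Rplus_le_le_0_compat; apply sqrt_pos. lra. }
    lra. }
  assert (S : summable (fun x => n x * (a x + b x) ^ 2)) by (exists ((sqrt Ta + sqrt Tb) ^ 2); auto).
  split; auto.
  rewrite <- (sqrt_pow2 (sqrt Ta + sqrt Tb)) by (apply Rplus_le_le_0_compat; apply sqrt_pos).
  apply sqrt_le_1_alt. apply tsum_le_ub; auto.
Qed.

Lemma cv_const (a : R) : Un_cv (fun _ => a) a.
Proof. intros eps He. exists 0%nat. intros. unfold R_dist. rewrite Rminus_diag, Rabs_R0. lra. Qed.

Lemma cv_sqrt0 (D : nat -> R) : Un_cv D 0 -> Un_cv (fun k => sqrt (D k)) 0.
Proof. intros H eps He. destruct (H (eps ^ 2)) as [N HN]. apply pow_lt; auto.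
  exists N. intros k Hk. specialize (HN k Hk). unfold R_dist in *. rewrite Rminus_0_r in *.
  rewrite Rabs_pos_eq by apply sqrt_pos. destruct (Rle_dec (D k) 0).
  - rewrite sqrt_neg_0; auto.
  - rewrite Rabs_pos_eq in HN by lra. rewrite <- (sqrt_pow2 eps) by lra. apply sqrt_lt_1_alt. lra.
Qed.

Lemma cv_of_dist (A : nat -> R) a (D : nat -> R) : Un_cv D 0 -> (forall k, Rabs (A k - a) <= D k) -> Un_cv A a.
Proof. intros H Hd eps He. destruct (H eps He) as [N HN]. exists N. intros k Hk. specialize (HN k Hk).
  unfold R_dist in *. rewrite Rminus_0_r in HN. specialize (Hd k). pose proof (Rle_abs (D k)). lra. Qed.

Theorem mainTheorem9 (V : Type) (b : V -> V -> R) (c : V -> R)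
  (HV : countably_infinite V) (Hg : is_weighted_graph b c)
  (Hn : forall x, 0 < nw b c x)
  (u : V -> R) (q : R) (Hu : QDom_val b c u q) :
  (1 - sqrt (1 - (alpha b c (fun _ => True)) ^ 2)) * nrm2 (nw b c) u <= q /\
  q <= (1 + sqrt (1 - (alpha b c (fun _ => True)) ^ 2)) * nrm2 (nw b c) u.
Proof.
  destruct HV as [e _]. set (v0 := e 0%nat).
  destruct Hu as [Su [uk [Hfin [Hcv [_ HQ]]]]].
  set (s := sqrt (1 - alpha b c (fun _ => True) ^ 2)).
  set (n := nw b c).
  assert (Hnn : forall x, 0 <= n x) by (intros; apply Rlt_le, Hn).
  assert (Hk : forall k, (1 - s) * nrm2 n (uk k) <= Qmax b c (uk k) /\ Qmax b c (uk k) <= (1 + s) * nrm2 n (uk k)).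
  { intros k. destruct (Hfin k) as [l Hl].
    set (dec := fun x y : V => excluded_middle_informative (x = y)).
    apply (graph_fin b c Hg v0 Hn (uk k) (nodup dec l)). apply NoDup_nodup.
    intros x Hx. apply Hl. intros Hx'. apply Hx. apply nodup_In; auto. }
  assert (Sk : forall k, summable (fun x => n x * uk k x ^ 2)).
  { intros k. destruct (Hfin k) as [l Hl].
    set (dec := fun x y : V => excluded_middle_informative (x = y)).
    apply (tsum_fin _ (nodup dec l)). intros; apply Rmult_le_pos; auto; apply pow2_ge_0. apply NoDup_nodup.
    intros x Hx. rewrite Hl. ring. intros Hx'. apply Hx. apply nodup_In; auto. }
  assert (Snu : summable (fun x => n x * (- u x) ^ 2)).
  { replace (fun x => n x * (- u x) ^ 2) with (fun x => n x * u x ^ 2). exact Su.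
    apply functional_extensionality; intros; ring. }
  assert (SD : forall k, summable (fun x => n x * (uk k x - u x) ^ 2)).
  { intros k. exact (proj1 (l2_add n (uk k) (fun x => - u x) Hnn (Sk k) Snu)). }
  set (N := nrm2 n u). set (Nk := fun k => nrm2 n (uk k)). set (D := fun k => nrm2 n (fun x => uk k x - u x)).
  assert (Hdist : forall k, Rabs (sqrt (Nk k) - sqrt N) <= sqrt (D k)).
  { intros k.
    assert (A1 : sqrt (Nk k) <= sqrt N + sqrt (D k)).
    { pose proof (proj2 (l2_add n u (fun x => uk k x - u x) Hnn Su (SD k))) as H. cbv beta in H.
      replace (fun x => n x * (u x + (uk k x - u x)) ^ 2) with (fun x => n x * uk k x ^ 2) in H
        by (apply functional_extensionality; intros; ring). exact H. }
    assert (SD' : summable (fun x => n x * (u x - uk k x) ^ 2)).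
    { replace (fun x => n x * (u x - uk k x) ^ 2) with (fun x => n x * (uk k x - u x) ^ 2) by (apply functional_extensionality; intros; ring).
      apply SD. }
    assert (A2 : sqrt N <= sqrt (Nk k) + sqrt (D k)).
    { pose proof (proj2 (l2_add n (uk k) (fun x => u x - uk k x) Hnn (Sk k) SD')) as H. cbv beta in H.
      replace (fun x => n x * (uk k x + (u x - uk k x)) ^ 2) with (fun x => n x * u x ^ 2) in H
        by (apply functional_extensionality; intros; ring).
      replace (fun x => n x * (u x - uk k x) ^ 2) with (fun x => n x * (uk k x - u x) ^ 2) in H
        by (apply functional_extensionality; intros; ring). exact H. }
    unfold Rabs. destruct Rcase_abs; lra. }
  assert (Cs : Un_cv (fun k => sqrt (Nk k)) (sqrt N)).
  { apply cv_of_dist with (D := fun k => sqrt (D k)); auto. apply cv_sqrt0. exact Hcv. }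
  assert (Nk_nn : forall k, 0 <= Nk k) by (intros; apply tsum_nonneg; auto).
  assert (N_nn : 0 <= N) by (apply tsum_nonneg; auto).
  assert (CN : Un_cv Nk N).
  { pose proof (CV_mult _ _ _ _ Cs Cs) as H. rewrite sqrt_sqrt in H by auto.
    intros eps He. destruct (H eps He) as [M HM]. exists M. intros k Hk'. specialize (HM k Hk').
    rewrite sqrt_sqrt in HM by auto. exact HM. }
  split.
  - apply Rle_cv_lim with (Un := fun k => (1 - s) * Nk k) (Vn := fun k => Qmax b c (uk k)).
    + intros; apply Hk.
    + apply CV_mult; [apply cv_const | exact CN].
    + exact HQ.
  - apply Rle_cv_lim with (Un := fun k => Qmax b c (uk k)) (Vn := fun k => (1 + s) * Nk k).
    + intros; apply Hk.
    + exact HQ.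
    + apply CV_mult; [apply cv_const | exact CN].
Qed.
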